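(* Let $n\ge3$. For a Boolean algebra $\mathbf A$ let $\mathbf A^r$ be the algebra on $A$ with ternary operations $t_1(x,y,z)=x(y'+z)$, $t_h(x,y,z)=xz$ for $2\le h\le n-2$, $t_{n-1}(x,y,z)=z(y'+x)$. Let $\mathbf A_1=\mathbf A_2=\mathbf 4^r$ and $\mathbf A_3=\mathbf 2^r$, where $\mathbf 4$ and $\mathbf 2$ are the $4$- and $2$-element Boolean algebras (distinguished element $0$). Let $\mathbf D$ be an algebra with ternary operations $s_0,\dots,s_{n-2}$ and let $\mathbf A_4$ be the algebra on $D$ with operations $t_{i+1}=s_i$ ($0\le i\le n-2$); assume $t_1$ is the first projection, $t_{n-1}$ the third projection and $t_h(x,y,x)=x$ for $2\le h\le n-2$ in $\mathbf A_4$. For $a,d\in A_4$ let $\mathbf B(a,d)$ be the subalgebra of $\mathbf A_1\times\mathbf A_2\times\mathbf A_3\times\mathbf A_4$ whose universe is the set of elements of at least one of the forms $(\ast,0,\ast,a)$, $(0,0,\ast,\ast)$, $(0,\ast,\ast,d)$, $(\ast,\ast,0,\ast)$. (i) If $n$ is even and $s_0,\dots,s_{n-2}$ are J\'onsson operations for $\mathbf D$ (with $n-2$ in place of $n$), then for all $a,d$ the algebra $\mathbf B(a,d)$ is $n$-alvin (with operations $t_1,\dots,t_{n-1}$ together with the first and third projections as $t_0,t_n$). (ii) If for some $r$ and some congruences $\tilde\alpha,\tilde\beta,\tilde\gamma$ of $\mathbf A_4$ the inclusion $\tilde\alpha(\tilde\beta\circ\tilde\alpha\tilde\gamma\circ\tilde\beta)\subseteq\tilde\alpha\tilde\gamma\circ\tilde\alpha\tilde\beta\circ\stackrel{r}{\dots}$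 fails, then there are $a,d\in A_4$ and congruences $\alpha,\beta,\gamma$ of $\mathbf B(a,d)$ such that $\alpha(\beta\circ\alpha\gamma\circ\beta)\subseteq\alpha\beta\circ\alpha\gamma\circ\stackrel{r+2}{\dots}$ fails.
   Context: Boolean operations: juxtaposition (meet), $+$ (join), $'$ (complement). For relations juxtaposition is intersection and $\circ$ composition; $X\circ Y\circ\stackrel{k}{\dots}$ is the alternating composition $X\circ Y\circ X\circ\cdots$ with $k$ factors. J\'onsson (alvin) operations $t_0,\dots,t_n$: $t_0(x,y,z)=x$, $t_n(x,y,z)=z$, $t_h(x,y,x)=x$ for all $h$, $t_h(x,x,z)=t_{h+1}(x,x,z)$ for even $h$ and $t_h(x,z,z)=t_{h+1}(x,z,z)$ for odd $h$ (alvin: even/odd exchanged); an algebra is $n$-alvin if it has alvin terms $t_0,\dots,t_n$. *)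

(* Defs.v *)
From mathcomp Require Import all_boot.
Set Implicit Arguments. Unset Strict Implicit. Unset Printing Implicit Defensive.

(* The 2^k-element Boolean algebra is modelled as {set 'I_k}:
   meet = :&:, join = :|:, complement = ~:, zero = set0.
   Four := {set 'I_2} (4 elements), Two := {set 'I_1} (2 elements). *)
Definition Four := {set 'I_2}.
Definition Two := {set 'I_1}.

Definition tr (n h : nat) (T : finType) (x y z : {set T}) : {set T} :=
  if h == 1 then x :&: (~: y :|: z)
  else if h == n.-1 then z :&: (~: y :|: x)
  else x :&: z.

Definition Prod (D : Type) := (Four * Four * Two * D)%type.

Definition tP (n : nat) (D : Type) (s : nat -> D -> D -> D -> D) (h : nat)
  (u v w : Prod D) : Prod D :=
  (tr n h u.1.1.1 v.1.1.1 w.1.1.1,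
   tr n h u.1.1.2 v.1.1.2 w.1.1.2,
   tr n h u.1.2 v.1.2 w.1.2,
   s h.-1 u.2 v.2 w.2).

Definition tB (n : nat) (D : Type) (s : nat -> D -> D -> D -> D) (h : nat)
  (u v w : Prod D) : Prod D :=
  if h == 0 then u else if n <= h then w else tP n s h u v w.

Definition Bpred (D : Type) (a d : D) (u : Prod D) : Prop :=
  let: (x1, x2, x3, x4) := u in
  (x2 = set0 /\ x4 = a) \/ (x1 = set0 /\ x2 = set0) \/
  (x1 = set0 /\ x4 = d) \/ x3 = set0.

Definition jonsson (T : Type) (m : nat) (s : nat -> T -> T -> T -> T) : Prop :=
  forall x y z : T,
    s 0 x y z = x /\ s m x y z = z /\
    (forall h, h <= m -> s h x y x = x) /\
    (forall h, h < m -> ~~ odd h -> s h x x z = s h.+1 x x z) /\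
    (forall h, h < m -> odd h -> s h x z z = s h.+1 x z z).

Definition alvin_on (T : Type) (U : T -> Prop) (n : nat)
  (t : nat -> T -> T -> T -> T) : Prop :=
  forall x y z : T, U x -> U y -> U z ->
    t 0 x y z = x /\ t n x y z = z /\
    (forall h, h <= n -> t h x y x = x) /\
    (forall h, h < n -> odd h -> t h x x z = t h.+1 x x z) /\
    (forall h, h < n -> ~~ odd h -> t h x z z = t h.+1 x z z).

Definition congr_on (T : Type) (U : T -> Prop) (n : nat)
  (t : nat -> T -> T -> T -> T) (R : T -> T -> Prop) : Prop :=
  (forall x y, R x y -> U x /\ U y) /\
  (forall x, U x -> R x x) /\
  (forall x y, R x y -> R y x) /\
  (forall x y z, R x y -> R y z -> R x z) /\
  (forall h, 1 <= h <= n.-1 -> forall x x' y y' z z',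
     R x x' -> R y y' -> R z z' -> R (t h x y z) (t h x' y' z')).

Definition meetR (T : Type) (R S : T -> T -> Prop) : T -> T -> Prop :=
  fun x y => R x y /\ S x y.
Definition compR (T : Type) (R S : T -> T -> Prop) : T -> T -> Prop :=
  fun x y => exists z, R x z /\ S z y.
(* altR X Y k = X o Y o X o ... with k factors (k = 0: equality). *)
Fixpoint altR (T : Type) (X Y : T -> T -> Prop) (k : nat) : T -> T -> Prop :=
  match k with
  | 0 => fun x y => x = y
  | 1 => X
  | k'.+1 => compR X (altR Y X k')
  end.
Definition inclR (T : Type) (R S : T -> T -> Prop) : Prop :=
  forall x y, R x y -> S x y.

(* Main.v *)
Require Import Defs.
From mathcomp Require Import all_boot zify.
From Stdlib Require Import Classical.
Set Implicit Arguments. Unset Strict Implicit. Unset Printing Implicit Defensive.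

Lemma tr_xyx n h (T : finType) (x y : {set T}) : tr n h x y x = x.
Proof.
rewrite /tr; case: ifP => _; [|case: ifP => _]; apply/setP => i; rewrite !inE;
  by case: (i \in x); case: (i \in y).
Qed.
Lemma tr_capS n h (T : finType) (x y z S : {set T}) :
  tr n h x y z :&: S = tr n h (x :&: S) (y :&: S) (z :&: S).
Proof.
rewrite /tr; case: ifP => _; [|case: ifP => _]; apply/setP => i; rewrite !inE;
  by case: (i \in S); case: (i \in x); case: (i \in y); case: (i \in z).
Qed.
Lemma tr_xxz n h (T : finType) (x z : {set T}) : h != n.-1 -> tr n h x x z = x :&: z.
Proof.
move=> H; rewrite /tr (negbTE H); case: ifP => _ //; apply/setP => i; rewrite !inE;
  by case: (i \in x); case: (i \in z).
Qed.
Lemma tr_xzz n h (T : finType) (x z : {set T}) : h != 1 -> tr n h x z z = x :&: z.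
Proof.
move=> H; rewrite /tr (negbTE H); case: ifP => _ //; apply/setP => i; rewrite !inE;
  by case: (i \in x); case: (i \in z).
Qed.
Lemma tr_0l n h (T : finType) (y z : {set T}) : h != n.-1 -> tr n h set0 y z = set0.
Proof. by move=> H; rewrite /tr (negbTE H); case: ifP => _; rewrite set0I. Qed.
Lemma tr_0r n h (T : finType) (x y : {set T}) : h != 1 -> tr n h x y set0 = set0.
Proof. by move=> H; rewrite /tr (negbTE H); case: ifP => _; rewrite ?set0I ?setI0. Qed.
Lemma tr_mid n h (T : finType) (x y z : {set T}) : h != 1 -> h != n.-1 -> tr n h x y z = x :&: z.
Proof. by move=> H1 H2; rewrite /tr (negbTE H1) (negbTE H2). Qed.

Lemma altR_cons (T : Type) (X Y : T -> T -> Prop) k p q :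
  altR X Y k.+1 p q -> exists z, X p z /\ altR Y X k z q.
Proof. by case: k => [|k] /=; [exists q|]. Qed.

Lemma altR_snoc (T : Type) k : forall (X Y : T -> T -> Prop) p q,
  altR X Y k.+1 p q -> exists w, altR X Y k p w /\ (if odd k then Y else X) w q.
Proof.
elim: k => [|k IH] X Y p q /=.
  by move=> H; exists p.
case=> z [Hz /IH [w [H1 H2]]]; exists w; split.
  by case: k IH H1 H2 => [|k] IH /= H1 H2; [rewrite -H1|exists z].
by move: H2; case: (odd k).
Qed.

Lemma altR_map (T U : Type) (f : T -> U) k : forall (X Y : T -> T -> Prop)
  (X' Y' : U -> U -> Prop),
  (forall p q, X p q -> X' (f p) (f q)) -> (forall p q, Y p q -> Y' (f p) (f q)) ->
  forall p q, altR X Y k p q -> altR X' Y' k (f p) (f q).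
Proof.
elim: k => [|k IH] X Y X' Y' HX HY p q; first by move=> /= ->.
move=> H0; have [z [Hz H]] := altR_cons H0.
have := IH _ _ _ _ HY HX _ _ H.
clear H0; case: k {IH H} => [|k] /=; first by move=> <-; apply: HX.
by move=> H; exists (f z); split => //; apply: HX.
Qed.

Section S.
Variables (n : nat) (D : Type) (s : nat -> D -> D -> D -> D).
Hypotheses (Hn : 3 <= n) (Ht1 : forall x y z : D, s 0 x y z = x)
  (Htn1 : forall x y z : D, s (n - 2) x y z = z)
  (Hth : forall h, 2 <= h <= n - 2 -> forall x y : D, s h.-1 x y x = x).

Lemma Bclosed a d h x y z : 1 <= h <= n.-1 ->
  Bpred a d x -> Bpred a d y -> Bpred a d z -> Bpred a d (tP n s h x y z).
Proof.
move=> /andP[h1 h2].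
case: x => [[[x1 x2] x3] x4]; case: y => [[[y1 y2] y3] y4];
case: z => [[[z1 z2] z3] z4].
rewrite /tP /Bpred /=.
have [E|hn1] := eqVneq h 1.
  have hn : h != n.-1 by rewrite E; apply/eqP; lia.
  have -> : h.-1 = 0 by rewrite E.
  rewrite Ht1 => Hx _ _.
  case: Hx => [[-> ->]|[[-> ->]|[[-> ->]|->]]]; rewrite ?tr_0l //; tauto.
have [E|hnn] := eqVneq h n.-1.
  have -> : h.-1 = n - 2 by lia.
  rewrite Htn1 => _ _ Hz.
  case: Hz => [[-> ->]|[[-> ->]|[[-> ->]|->]]]; rewrite ?tr_0r //; tauto.
rewrite !tr_mid //.
move=> Hx _ Hz.
case: Hx => [[-> ->]|[[-> ->]|[[-> ->]|->]]];
case: Hz => [[-> ->]|[[-> ->]|[[-> ->]|->]]];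
rewrite ?set0I ?setI0 ?Hth; try lia; tauto.
Qed.

Definition Rel (a d : D) (S1 S2 : {set 'I_2}) (S3 : {set 'I_1}) (R : D -> D -> Prop)
  (p q : Prod D) : Prop :=
  Bpred a d p /\ Bpred a d q /\ p.1.1.1 :&: S1 = q.1.1.1 :&: S1 /\
  p.1.1.2 :&: S2 = q.1.1.2 :&: S2 /\ p.1.2 :&: S3 = q.1.2 :&: S3 /\ R p.2 q.2.

Lemma congrRel a d S1 S2 S3 R :
  congr_on (fun _ => True) n (fun h => s h.-1) R ->
  congr_on (Bpred a d) n (tB n s) (Rel a d S1 S2 S3 R).
Proof.
move=> [_ [Rr [Rs [Rt Rc]]]].
split; first by move=> x y [? [? _]].
split; first by move=> x Hx; do !split => //; apply: Rr.
split; first by move=> x y [? [? [? [? [? ?]]]]]; do !split => //; apply: Rs.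
split.
  move=> x y z [? [? [E1 [E2 [E3 ?]]]]] [? [? [F1 [F2 [F3 ?]]]]].
  do !split => //; [by rewrite E1|by rewrite E2|by rewrite E3|by apply: Rt; eauto].
move=> h Hh x x' y y' z z' [Bx [Bx' [X1 [X2 [X3 X4]]]]]
  [By [By' [Y1 [Y2 [Y3 Y4]]]]] [Bz [Bz' [Z1 [Z2 [Z3 Z4]]]]].
have -> : tB n s h = tP n s h.
  rewrite /tB; case/andP: Hh => h1 h2.
  have -> : (h == 0) = false by apply/eqP; lia.
  by have -> : (n <= h) = false by lia.
do !split; try by apply: Bclosed.
- by rewrite /tP /= tr_capS X1 Y1 Z1 -tr_capS.
- by rewrite /tP /= tr_capS X2 Y2 Z2 -tr_capS.
- by rewrite /tP /= tr_capS X3 Y3 Z3 -tr_capS.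
- by rewrite /tP /=; apply: Rc.
Qed.


Lemma tr_nxxz (T : finType) h (x z : {set T}) : h != 1 -> h == n.-1 -> tr n h x x z = z.
Proof.
move=> H1 H2; rewrite /tr (negbTE H1) H2; apply/setP => i; rewrite !inE;
  by case: (i \in x); case: (i \in z).
Qed.
Lemma tr_1xzz (T : finType) (x z : {set T}) : tr n 1 x z z = x.
Proof.
rewrite /tr eqxx; apply/setP => i; rewrite !inE;
  by case: (i \in x); case: (i \in z).
Qed.

Lemma partI (Hev : ~~ odd n) (J : jonsson (n-2) s) a d : alvin_on (Bpred a d) n (tB n s).
Proof.
move=> x y z _ _ _.
have n0 : (n == 0) = false by apply/eqP; lia.
case: x => [[[x1 x2] x3] x4]; case: y => [[[y1 y2] y3] y4];
case: z => [[[z1 z2] z3] z4].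
have [J1 [J2 [J3 [J4 J5]]]] := J x4 y4 z4.
split; first by rewrite /tB eqxx.
split; first by rewrite /tB n0 leqnn.
split.
  move=> h hn; rewrite /tB; case: eqP => // h0; case: leqP => // hlt.
  rewrite /tP /= !tr_xyx.
  by have [_ [_ [J3' _]]] := J x4 y4 x4; rewrite J3' //; lia.
split.
  move=> h hn oh.
  have h0 : (h == 0) = false by apply/eqP => E; rewrite E in oh.
  have hl : (n <= h) = false by lia.
  rewrite /tB h0 hl /=.
  have [E|ne] := eqVneq h.+1 n.
    rewrite E leqnn.
    have h1 : h != 1 by apply/eqP; lia.
    have h2 : h == n.-1 by apply/eqP; lia.
    rewrite /tP /= !tr_nxxz //.
    have -> : h.-1 = n - 2 by lia.
    by have [_ [J2' _]] := J x4 x4 z4; rewrite J2'.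
  have -> : (n <= h.+1) = false by lia.
  have pn : h.+1 != n.-1.
    apply/eqP => E; move: Hev; have -> : n = h.+2 by lia.
    by rewrite /= negbK oh.
  have hn1 : h != n.-1 by apply/eqP; lia.
  rewrite /tP /= !tr_xxz //.
  have [_ [_ [_ [J4' _]]]] := J x4 x4 z4.
  rewrite J4'; last by case: h oh {hn h0 hl ne pn hn1}.
  - by rewrite prednK //; lia.
  - lia.
move=> h hn oh.
have [->|h0] := eqVneq h 0.
  rewrite /tB /=.
  have -> : (n <= 1) = false by lia.
  by rewrite /tP /= !tr_1xzz Ht1.
have hl : (n <= h) = false by lia.
rewrite /tB (negbTE h0) hl /=.
have pn : h.+1 != n.
  apply/eqP => E; move: Hev; rewrite -E /=; by rewrite oh.
have -> : (n <= h.+1) = false by lia.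
have h1 : h != 1 by apply/eqP => E; rewrite E in oh.
rewrite /tP /= !tr_xzz //.
have [_ [_ [_ [_ J5']]]] := J x4 z4 z4.
rewrite J5'.
- by rewrite prednK //; lia.
- lia.
- by case: h oh h0 {hn hl pn h1} => [|h] //=; rewrite negbK.
Qed.


Lemma Bform_a a d (w : Prod D) : Bpred a d w -> w.1.2 != set0 -> w.1.1.1 != set0 -> w.2 = a.
Proof.
case: w => [[[w1 w2] w3] w4] /=.
by case=> [[_ ->]|[[-> _]|[[-> _]|->]]] //; rewrite ?eqxx.
Qed.
Lemma Bform_d a d (w : Prod D) : Bpred a d w -> w.1.2 != set0 -> w.1.1.2 != set0 -> w.2 = d.
Proof.
case: w => [[[w1 w2] w3] w4] /=.
by case=> [[-> _]|[[_ ->]|[[_ ->]|->]]] //; rewrite ?eqxx.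
Qed.

Lemma partII r (r0 : 0 < r) (al be ga : D -> D -> Prop) :
  congr_on (fun _ => True) n (fun h => s h.-1) al ->
  congr_on (fun _ => True) n (fun h => s h.-1) be ->
  congr_on (fun _ => True) n (fun h => s h.-1) ga ->
  ~ inclR (meetR al (compR be (compR (meetR al ga) be)))
          (altR (meetR al ga) (meetR al be) r) ->
  exists (a d : D) (al' be' ga' : Prod D -> Prod D -> Prop),
    congr_on (Bpred a d) n (tB n s) al' /\
    congr_on (Bpred a d) n (tB n s) be' /\
    congr_on (Bpred a d) n (tB n s) ga' /\
    ~ inclR (meetR al' (compR be' (compR (meetR al' ga') be')))
            (altR (meetR al' be') (meetR al' ga') (r + 2)).
Proof.
move=> Cal Cbe Cga Hnot.
have [[x y] /= Hxy Hny] : exists2 p : D * D,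
   meetR al (compR be (compR (meetR al ga) be)) p.1 p.2 &
   ~ altR (meetR al ga) (meetR al be) r p.1 p.2.
  apply: NNPP => H; apply: Hnot => x y Hxy; apply: NNPP => Hn'; apply: H; by exists (x, y).
case: Hxy => Hal [u [Hxu [v [[Hauv Hguv] Hvy]]]].
pose s0 : {set 'I_2} := [set ord0].
pose s1 : {set 'I_2} := [set ord_max].
have s01 : s0 :&: s1 = set0.
  apply/setP => i; rewrite !inE; by case: i => [[|[|]] ?].
have nz0 : s0 != set0 by apply/set0Pn; exists ord0; rewrite inE.
have nz1 : s1 != set0 by apply/set0Pn; exists ord_max; rewrite inE.
have nzT : (setT : {set 'I_1}) != set0 by apply/set0Pn; exists ord0; rewrite inE.
exists x, y, (Rel x y set0 set0 setT al), (Rel x y s0 s0 set0 be),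
  (Rel x y s1 s1 set0 ga).
split; first exact: congrRel.
split; first exact: congrRel.
split; first exact: congrRel.
pose x' : Prod D := (setT, set0, setT, x).
pose y' : Prod D := (set0, setT, setT, y).
pose u' : Prod D := (s0, set0, set0, u).
pose v' : Prod D := (set0, s0, set0, v).
have Bx : Bpred x y x' by left.
have By : Bpred x y y' by right; right; left.
have Bu : Bpred x y u' by right; right; right.
have Bv : Bpred x y v' by right; right; right.
move=> H.
have : altR (meetR (Rel x y set0 set0 setT al) (Rel x y s0 s0 set0 be))
            (meetR (Rel x y set0 set0 setT al) (Rel x y s1 s1 set0 ga)) (r + 2) x' y'.
  apply: H; split.
    by do !split => //; rewrite /= ?setI0.
  exists u'; split.
    by do !split => //; rewrite /= ?setI0 ?setTI ?setIid.
  exists v'; split; last first.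
    by do !split => //; rewrite /= ?setI0 ?setTI ?setIid.
  split; by do !split => //; rewrite /= ?setI0 ?set0I ?s01.
rewrite addn2 => H0.
have [w1 [[A1 B1] H2]] := altR_cons H0.
have [w [H3 H4]] := altR_snoc H2.
have E1 : w1.2 = x.
  case: A1 => _ [Bw1 [_ [_ [X3 _]]]].
  case: B1 => _ [_ [Y1 _]].
  apply: (Bform_a Bw1).
    by move: X3; rewrite /= !setIT => <-.
  apply/eqP => E; move: Y1; rewrite E /= setTI set0I => E'.
  by rewrite -E' eqxx in nz0.
have E2 : w.2 = y.
  have Hw : Rel x y set0 set0 setT al w y' /\
      (w.1.1.2 :&: s0 != set0 \/ w.1.1.2 :&: s1 != set0).
    case: (odd r) H4 => -[HA HB]; split => //; [left|right].
      by case: HB => _ [_ [_ [-> _]]]; rewrite /= setTI.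
    by case: HB => _ [_ [_ [-> _]]]; rewrite /= setTI.
  case: Hw => [[Bw [_ [_ [_ [X3 _]]]]] Y2].
  apply: (Bform_d Bw).
    by move: X3; rewrite /= !setIT => ->.
  by apply/eqP => E; rewrite E !set0I eqxx in Y2; case: Y2.
apply: Hny; rewrite -E1 -E2.
apply: (altR_map (f := snd) _ _ H3).
  by move=> p q [[_ [_ [_ [_ [_ ?]]]]] [_ [_ [_ [_ [_ ?]]]]]].
by move=> p q [[_ [_ [_ [_ [_ ?]]]]] [_ [_ [_ [_ [_ ?]]]]]].
Qed.
End S.

Theorem theorem3p9 (n : nat) (Hn : 3 <= n) (D : Type)
  (s : nat -> D -> D -> D -> D)
  (Ht1 : forall x y z : D, s 0 x y z = x)
  (Htn1 : forall x y z : D, s (n - 2) x y z = z)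
  (Hth : forall h, 2 <= h <= n - 2 -> forall x y : D, s h.-1 x y x = x) :
  (~~ odd n -> jonsson (n - 2) s ->
     forall a d : D, alvin_on (Bpred a d) n (tB n s))
  /\
  (forall r : nat, 0 < r ->
   forall al be ga : D -> D -> Prop,
     congr_on (fun _ => True) n (fun h => s h.-1) al ->
     congr_on (fun _ => True) n (fun h => s h.-1) be ->
     congr_on (fun _ => True) n (fun h => s h.-1) ga ->
     ~ inclR (meetR al (compR be (compR (meetR al ga) be)))
             (altR (meetR al ga) (meetR al be) r) ->
     exists (a d : D) (al' be' ga' : Prod D -> Prod D -> Prop),
       congr_on (Bpred a d) n (tB n s) al' /\
       congr_on (Bpred a d) n (tB n s) be' /\
       congr_on (Bpred a d) n (tB n s) ga' /\
       ~ inclR (meetR al' (compR be' (compR (meetR al' ga') be')))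
               (altR (meetR al' be') (meetR al' ga') (r + 2))).
Proof.
split.
  by move=> Hev J a d; apply: partI.
by move=> r r0 al be ga; apply: partII.
Qed.
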